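(* Let $(M,g)$ be a pseudo-Riemannian manifold with Levi-Civita connection $\nabla^{g}$, let $J$ be a $g$-symmetric $(1,1)$-tensor field with $J^2=pJ+qI$, $p,q\in\mathbb{R}$, $p^2+4q>0$, and let $\nabla$ be a linear connection on $M$. Then the distributions $\mathcal{D}$ and $\mathcal{D}'$ are $\tilde{\nabla}$-geodesically invariant, $\bar{\nabla}$-geodesically invariant and $\tilde{\tilde{\nabla}}$-geodesically invariant.
   Context: $\sigma_{\pm}:=\frac{p\pm\sqrt{p^2+4q}}{2}$, $\mathcal{P}:=\frac{1}{\sqrt{p^2+4q}}(-J+\sigma_{+}I)$, $\mathcal{P}':=\frac{1}{\sqrt{p^2+4q}}(J-\sigma_{-}I)$, $\mathcal{D}:=\ker\mathcal{P}'$, $\mathcal{D}':=\ker\mathcal{P}$. For a linear connection $D$, a distribution $\mathcal{E}$ is $D$-geodesically invariant if $X,Y\in\Gamma(\mathcal{E})$ implies $D_XY+D_YX\in\Gamma(\mathcal{E})$. The Schouten-van Kampen connection of $\nabla$ is $\tilde{\nabla}_XY:=\mathcal{P}(\nabla_X\mathcal{P}Y)+\mathcal{P}'(\nabla_X\mathcal{P}'Y)$; the Vrănceanu connection of $\nabla$ is $\bar{\nabla}_XY:=\tilde{\nabla}_{\mathcal{P}X}Y+\mathcal{P}([\mathcal{P}'X,\mathcal{P}Y])+\mathcal{P}'([\mathcal{P}X,\mathcal{P}'Y])$; the Vidal connection is $\tilde{\tilde{\nabla}}_XY:=\nabla^g_XY+\frac{1}{p^2+4q}[2J((\nabla^g_XJ)Y)-p(\nabla^g_XJ)Y+J((\nabla^g_YJ)X)+(\nabla^g_{JY}J)X-p(\nabla^g_YJ)X]$.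 *)

(* Defs.v *)
(* Algebraic model of the geometric data:
   A  = ring of smooth real functions C^oo(M) (an R-algebra),
   V  = module of vector fields Gamma(TM) over A,
   der X f = X(f) (action of vector fields on functions),
   br X Y  = Lie bracket [X,Y],
   g       = the metric, C^oo-bilinear form V x V -> A. *)
From HB Require Import structures.
From mathcomp Require Import all_boot all_order all_algebra.
From mathcomp Require Import reals.
Set Implicit Arguments. Unset Strict Implicit. Unset Printing Implicit Defensive.
Import Order.TTheory GRing.Theory Num.Theory.
Local Open Scope ring_scope.

Section Geo.
Variables (R : realType) (A : comAlgType R) (V : lmodType A).

Record vector_field_structure (der : V -> A -> A) (br : V -> V -> V) : Prop := {
  der_addX : forall X X' f, der (X + X') f = der X f + der X' f;
  der_scaleX : forall (h : A) X f, der (h *: X) f = h * der X f;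
  der_addf : forall X f h, der X (f + h) = der X f + der X h;
  der_mulf : forall X f h, der X (f * h) = der X f * h + f * der X h;
  der_const : forall X (r : R), der X (r%:A) = 0;
  br_addl : forall X X' Y, br (X + X') Y = br X Y + br X' Y;
  br_anti : forall X Y, br X Y = - br Y X;
  br_leibniz : forall X Y (f : A), br X (f *: Y) = f *: br X Y + der X f *: Y;
  br_jacobi : forall X Y Z, br X (br Y Z) + br Y (br Z X) + br Z (br X Y) = 0;
  br_der : forall X Y f, der (br X Y) f = der X (der Y f) - der Y (der X f) }.

Record linear_connection (der : V -> A -> A) (nabla : V -> V -> V) : Prop := {
  nabla_addX : forall X X' Y, nabla (X + X') Y = nabla X Y + nabla X' Y;
  nabla_scaleX : forall (f : A) X Y, nabla (f *: X) Y = f *: nabla X Y;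
  nabla_addY : forall X Y Y', nabla X (Y + Y') = nabla X Y + nabla X Y';
  nabla_leibniz : forall X (f : A) Y, nabla X (f *: Y) = f *: nabla X Y + der X f *: Y }.

Record pseudo_metric (g : V -> V -> A) : Prop := {
  g_sym : forall X Y, g X Y = g Y X;
  g_addl : forall X X' Y, g (X + X') Y = g X Y + g X' Y;
  g_scalel : forall (f : A) X Y, g (f *: X) Y = f * g X Y;
  g_nondeg : forall X, (forall Y, g X Y = 0) -> X = 0 }.

Record levi_civita (der : V -> A -> A) (br : V -> V -> V) (g : V -> V -> A)
    (nablag : V -> V -> V) : Prop := {
  lc_conn : linear_connection der nablag;
  lc_torsion_free : forall X Y, nablag X Y - nablag Y X = br X Y;
  lc_metric : forall X Y Z, der X (g Y Z) = g (nablag X Y) Z + g Y (nablag X Z) }.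

Record tensor11 (J : V -> V) : Prop := {
  J_add : forall X Y, J (X + Y) = J X + J Y;
  J_scale : forall (f : A) X, J (f *: X) = f *: J X }.

Definition g_symmetric (g : V -> V -> A) (J : V -> V) : Prop :=
  forall X Y, g (J X) Y = g X (J Y).

Definition poly_structure (J : V -> V) (p q : R) : Prop :=
  forall X, J (J X) = p%:A *: J X + q%:A *: X.

Definition rsc (c : R) (X : V) : V := c%:A *: X.

Definition disc (p q : R) : R := p ^+ 2 + 4 * q.
Definition sigma_p (p q : R) : R := (p + Num.sqrt (disc p q)) / 2.
Definition sigma_m (p q : R) : R := (p - Num.sqrt (disc p q)) / 2.

Definition projP (J : V -> V) (p q : R) (X : V) : V :=
  rsc (Num.sqrt (disc p q))^-1 (- J X + rsc (sigma_p p q) X).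
Definition projP' (J : V -> V) (p q : R) (X : V) : V :=
  rsc (Num.sqrt (disc p q))^-1 (J X - rsc (sigma_m p q) X).

(* distributions, represented by their spaces of sections *)
Definition distD (J : V -> V) (p q : R) : V -> Prop := fun X => projP' J p q X = 0.
Definition distD' (J : V -> V) (p q : R) : V -> Prop := fun X => projP J p q X = 0.

Definition geodesically_invariant (D : V -> V -> V) (E : V -> Prop) : Prop :=
  forall X Y, E X -> E Y -> E (D X Y + D Y X).

Definition schouten (J : V -> V) (p q : R) (nabla : V -> V -> V) (X Y : V) : V :=
  projP J p q (nabla X (projP J p q Y)) + projP' J p q (nabla X (projP' J p q Y)).

Definition vranceanu (br : V -> V -> V) (J : V -> V) (p q : R)
    (nabla : V -> V -> V) (X Y : V) : V :=
  schouten J p q nabla (projP J p q X) Y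
  + projP J p q (br (projP' J p q X) (projP J p q Y))
  + projP' J p q (br (projP J p q X) (projP' J p q Y)).

Definition covJ (nabla : V -> V -> V) (J : V -> V) (X Y : V) : V :=
  nabla X (J Y) - J (nabla X Y).

Definition vidal (J : V -> V) (p q : R) (nablag : V -> V -> V) (X Y : V) : V :=
  nablag X Y + rsc (disc p q)^-1
    (rsc 2 (J (covJ nablag J X Y)) - rsc p (covJ nablag J X Y)
     + J (covJ nablag J Y X) + covJ nablag J (J Y) X - rsc p (covJ nablag J Y X)).

End Geo.

(* Main.v *)
Require Import Defs.
From HB Require Import structures.
From mathcomp Require Import all_boot all_order all_algebra.
From mathcomp Require Import reals.
From mathcomp Require Import ring.
Import Order.TTheory GRing.Theory Num.Theory.
Set Implicit Arguments. Unset Strict Implicit.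
Local Open Scope ring_scope.

Section Aux.
Variables (R : realType) (A : comAlgType R) (V : lmodType A).
Variable J : V -> V.
Variables (p q : R).
Hypothesis HJ : tensor11 J.
Hypothesis HP : poly_structure J p q.

Lemma algD (a b : R) : (a + b)%:A = a%:A + b%:A :> A.
Proof. by rewrite scalerDl. Qed.
Lemma algM (a b : R) : (a * b)%:A = a%:A * b%:A :> A.
Proof. by rewrite -scalerAl mul1r scalerA. Qed.
Lemma algN (a : R) : (- a)%:A = - a%:A :> A.
Proof. by rewrite scaleNr. Qed.
Lemma alg0 : (0 : R)%:A = 0 :> A.
Proof. by rewrite scale0r. Qed.
Lemma alg1 : (1 : R)%:A = 1 :> A.
Proof. by rewrite scale1r. Qed.

Lemma rscD (a b : R) (X : V) : rsc a X + rsc b X = rsc (a + b) X.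
Proof. by rewrite /rsc algD scalerDl. Qed.
Lemma rscDr (a : R) (X Y : V) : rsc a (X + Y) = rsc a X + rsc a Y.
Proof. by rewrite /rsc scalerDr. Qed.
Lemma rscA (a b : R) (X : V) : rsc a (rsc b X) = rsc (a * b) X.
Proof. by rewrite /rsc scalerA algM. Qed.
Lemma rscN (a : R) (X : V) : - rsc a X = rsc (- a) X.
Proof. by rewrite /rsc algN scaleNr. Qed.
Lemma rsc0 (X : V) : rsc 0 X = 0.
Proof. by rewrite /rsc alg0 scale0r. Qed.
Lemma rsc1 (X : V) : rsc 1 X = X.
Proof. by rewrite /rsc alg1 scale1r. Qed.
Lemma rscr0 (a : R) : rsc a (0 : V) = 0.
Proof. by rewrite /rsc scaler0. Qed.

Lemma J0 : J 0 = 0.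
Proof. have := J_add HJ 0 0; rewrite addr0 => /(congr1 (fun x => x - J 0)). by rewrite subrr addrK. Qed.
Lemma JN (X : V) : J (- X) = - J X.
Proof. by apply/eqP; rewrite -addr_eq0 -(J_add HJ) addNr J0. Qed.
Lemma Jrsc (a : R) (X : V) : J (rsc a X) = rsc a (J X).
Proof. by rewrite /rsc (J_scale HJ). Qed.

Definition Phi (Z W : V) (a b c e : R) :=
  rsc a Z + rsc b (J Z) + rsc c W + rsc e (J W).

Lemma PhiD (Z W : V) (a b c e a' b' c' e' : R) :
  Phi Z W a b c e + Phi Z W a' b' c' e' = Phi Z W (a + a') (b + b') (c + c') (e + e').
Proof. by rewrite /Phi -!rscD addrACA [X in X + _ = _]addrACA [X in X + _ + _ = _]addrACA. Qed.
Lemma PhiN (Z W : V) (a b c e : R) : - Phi Z W a b c e = Phi Z W (-a) (-b) (-c) (-e).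
Proof. by rewrite /Phi !opprD !rscN. Qed.
Lemma Phirsc (k : R) (Z W : V) (a b c e : R) : rsc k (Phi Z W a b c e) = Phi Z W (k * a) (k * b) (k * c) (k * e).
Proof. by rewrite /Phi !rscDr !rscA. Qed.
Lemma JJ (X : V) : J (J X) = rsc p (J X) + rsc q X.
Proof. exact: HP. Qed.
Lemma perm6 (x1 x2 x3 y1 y2 y3 : V) :
  x1 + x2 + x3 + y1 + y2 + y3 = x3 + x1 + x2 + y3 + y1 + y2.
Proof.
have E : forall u1 u2 u3 v1 v2 v3 : V, u1 + u2 + u3 + v1 + v2 + v3 = (u1 + u2 + u3) + (v1 + v2 + v3).
  by move=> *; rewrite !addrA.
by rewrite !E [x1 + x2 + x3]addrC [y1 + y2 + y3]addrC !addrA.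
Qed.
Lemma PhiJ (Z W : V) (a b c e : R) : J (Phi Z W a b c e) = Phi Z W (b * q) (a + b * p) (e * q) (c + e * p).
Proof.
rewrite /Phi !(J_add HJ) !Jrsc !JJ !rscDr !rscA -!rscD.
by rewrite !addrA perm6.
Qed.
Lemma Phi0 (Z W : V) : Phi Z W 0 0 0 0 = 0.
Proof. by rewrite /Phi !rsc0 !addr0. Qed.
Lemma PhiZ (Z W : V) : Z = Phi Z W 1 0 0 0.
Proof. by rewrite /Phi !rsc0 !addr0 rsc1. Qed.
Lemma PhiW (Z W : V) : W = Phi Z W 0 0 1 0.
Proof. by rewrite /Phi !rsc0 add0r addr0 rsc1 add0r. Qed.
Lemma Phi_eq0 (Z W : V) a b c e : a = 0 -> b = 0 -> c = 0 -> e = 0 -> Phi Z W a b c e = 0.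
Proof. by move=> -> -> -> ->; apply: Phi0. Qed.
Lemma rscm1 (X : V) : rsc (-1) X = - X.
Proof. by rewrite -rscN rsc1. Qed.

Variables (der : V -> A -> A) (br : V -> V -> V) (nablag : V -> V -> V).
Hypothesis Hvf : vector_field_structure der br.
Hypothesis Hc : linear_connection der nablag.

Lemma nab_rsc (X Y : V) (l : R) : nablag X (rsc l Y) = rsc l (nablag X Y).
Proof. by rewrite /rsc (nabla_leibniz Hc) (der_const Hvf) scale0r addr0. Qed.
Lemma nab_rscX (X Y : V) (l : R) : nablag (rsc l X) Y = rsc l (nablag X Y).
Proof. by rewrite /rsc (nabla_scaleX Hc). Qed.

Variable l : R.
Hypothesis hq : q = l ^+ 2 - p * l.
Hypothesis hl : 2 * l - p != 0.

Lemma covJ1 (X Y : V) : J Y = rsc l Y ->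
  covJ nablag J X Y = Phi (nablag X Y) (nablag Y X) l (-1) 0 0.
Proof. by move=> HY; rewrite /covJ HY nab_rsc /Phi !rsc0 !addr0 rscm1. Qed.
Lemma covJ2 (X Y : V) : J X = rsc l X ->
  covJ nablag J Y X = Phi (nablag X Y) (nablag Y X) 0 0 l (-1).
Proof. by move=> HX; rewrite /covJ HX nab_rsc /Phi !rsc0 !add0r rscm1. Qed.
Lemma covJ3 (X Y : V) : J X = rsc l X -> J Y = rsc l Y ->
  covJ nablag J (J Y) X = Phi (nablag X Y) (nablag Y X) 0 0 (l * l) (- l).
Proof.
move=> HX HY; rewrite /covJ HX HY !nab_rscX !nab_rsc Jrsc rscA /Phi !rsc0 !add0r.
by rewrite rscN.
Qed.
Lemma covJ4 (X Y : V) : J X = rsc l X -> J Y = rsc l Y ->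
  covJ nablag J (J X) Y = Phi (nablag X Y) (nablag Y X) (l * l) (- l) 0 0.
Proof.
move=> HX HY; rewrite /covJ HX HY !nab_rscX !nab_rsc Jrsc rscA /Phi !rsc0 !addr0.
by rewrite rscN.
Qed.

Lemma addZPhi (Z W : V) a b c e : Z + Phi Z W a b c e = Phi Z W (1 + a) b c e.
Proof. by rewrite {1}(PhiZ Z W) PhiD !add0r. Qed.
Lemma addWPhi (Z W : V) a b c e : W + Phi Z W a b c e = Phi Z W a b (1 + c) e.
Proof. by rewrite {1}(PhiW Z W) PhiD !add0r. Qed.

Lemma vidal_inv (X Y : V) : J X = rsc l X -> J Y = rsc l Y ->
  let T := vidal J p q nablag X Y + vidal J p q nablag Y X in
  J T = rsc l T.
Proof.
move=> HX HY T.
rewrite /T /vidal (covJ1 X HY) (covJ2 Y HX) (covJ3 HX HY) (covJ4 HX HY).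
rewrite !PhiJ.
do 3 rewrite ?(PhiN, Phirsc, PhiD).
rewrite addZPhi addWPhi PhiD PhiJ Phirsc.
have hd : p ^+ 2 + 4 * (l ^+ 2 - p * l) != 0.
  have -> : p ^+ 2 + 4 * (l ^+ 2 - p * l) = (2 * l - p) ^+ 2 by ring.
  by rewrite sqrf_eq0.
by congr Phi; rewrite /disc hq; field.
Qed.
Hypothesis Hd : 0 < disc p q.

Lemma s_facts : (Num.sqrt (disc p q) != 0) /\ (q = ((Num.sqrt (disc p q)) ^+ 2 - p ^+ 2) / 4).
Proof.
split; first by rewrite sqrtr_eq0 -ltNge.
by rewrite sqr_sqrtr ?(ltW Hd) // /disc; field.
Qed.

Lemma PP' (v : V) : projP' J p q (projP J p q v) = 0.
Proof.
rewrite /projP' /projP (PhiZ v v).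
rewrite !PhiJ; do 3 rewrite ?(PhiN, Phirsc, PhiD, PhiJ).
rewrite /sigma_p /sigma_m; case: s_facts.
move: (Num.sqrt (disc p q)) => s hs0 hq'.
by apply: Phi_eq0; rewrite hq'; field.
Qed.
Lemma P'P (v : V) : projP J p q (projP' J p q v) = 0.
Proof.
rewrite /projP' /projP (PhiZ v v).
rewrite !PhiJ; do 3 rewrite ?(PhiN, Phirsc, PhiD, PhiJ).
rewrite /sigma_p /sigma_m; case: s_facts.
move: (Num.sqrt (disc p q)) => s hs0 hq'.
by apply: Phi_eq0; rewrite hq'; field.
Qed.
Lemma P0 : projP J p q 0 = 0.
Proof. by rewrite /projP J0 oppr0 rscr0 add0r rscr0. Qed.
Lemma P'0 : projP' J p q 0 = 0.
Proof. by rewrite /projP' J0 rscr0 subrr rscr0. Qed.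
Lemma PD (u v : V) : projP J p q (u + v) = projP J p q u + projP J p q v.
Proof. by rewrite /projP -rscDr; congr rsc; rewrite (J_add HJ) opprD rscDr addrACA. Qed.
Lemma P'D (u v : V) : projP' J p q (u + v) = projP' J p q u + projP' J p q v.
Proof. by rewrite /projP' -rscDr; congr rsc; rewrite (J_add HJ) rscDr opprD addrACA. Qed.

Lemma rsc_inj0 (k : R) (v : V) : k != 0 -> rsc k v = 0 -> v = 0.
Proof.
move=> hk H; have : rsc k^-1 (rsc k v) = 0 by rewrite H rscr0.
by rewrite rscA mulVf // rsc1.
Qed.

Lemma inD (X : V) : distD J p q X -> J X = rsc (sigma_m p q) X.
Proof.
rewrite /distD /projP' => H; have [hs _] := s_facts.
have /eqP := rsc_inj0 (invr_neq0 hs) H; rewrite subr_eq0 => /eqP //.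
Qed.
Lemma toD (X : V) : J X = rsc (sigma_m p q) X -> distD J p q X.
Proof. by rewrite /distD /projP' => ->; rewrite subrr rscr0. Qed.
Lemma inD' (X : V) : distD' J p q X -> J X = rsc (sigma_p p q) X.
Proof.
rewrite /distD' /projP => H; have [hs _] := s_facts.
have /eqP := rsc_inj0 (invr_neq0 hs) H; rewrite addrC subr_eq0 => /eqP //.
Qed.
Lemma toD' (X : V) : J X = rsc (sigma_p p q) X -> distD' J p q X.
Proof. by rewrite /distD' /projP => ->; rewrite addNr rscr0. Qed.
End Aux.

Lemma nab0 {R : realType} {A : comAlgType R} {V : lmodType A} {der : V -> A -> A} {nabla : V -> V -> V} :
  linear_connection der nabla -> forall X : V, nabla X 0 = 0.
Proof.
move=> H X; have := nabla_addY H X 0 0; rewrite addr0 => /(congr1 (fun x => x - nabla X 0)).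
by rewrite subrr addrK.
Qed.
Lemma nab0X {R : realType} {A : comAlgType R} {V : lmodType A} {der : V -> A -> A} {nabla : V -> V -> V} :
  linear_connection der nabla -> forall Y : V, nabla 0 Y = 0.
Proof.
move=> H Y; have := nabla_addX H 0 0 Y; rewrite addr0 => /(congr1 (fun x => x - nabla 0 Y)).
by rewrite subrr addrK.
Qed.
Lemma br0l {R : realType} {A : comAlgType R} {V : lmodType A} {der : V -> A -> A} {br : V -> V -> V} :
  vector_field_structure der br -> forall Y : V, br 0 Y = 0.
Proof.
move=> H Y; have := br_addl H 0 0 Y; rewrite addr0 => /(congr1 (fun x => x - br 0 Y)).
by rewrite subrr addrK.
Qed.
Lemma br0r {R : realType} {A : comAlgType R} {V : lmodType A} {der : V -> A -> A} {br : V -> V -> V} :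
  vector_field_structure der br -> forall Y : V, br Y 0 = 0.
Proof. by move=> H Y; rewrite (br_anti H) (br0l H) oppr0. Qed.

Theorem mainTheorem6 (R : realType) (A : comAlgType R) (V : lmodType A)
  (der : V -> A -> A) (br : V -> V -> V) (g : V -> V -> A)
  (nablag : V -> V -> V) (J : V -> V) (p q : R) (nabla : V -> V -> V) :
  vector_field_structure der br ->
  pseudo_metric g ->
  levi_civita der br g nablag ->
  tensor11 J ->
  g_symmetric g J ->
  poly_structure J p q ->
  0 < disc p q ->
  linear_connection der nabla ->
  (geodesically_invariant (schouten J p q nabla) (distD J p q) /\
   geodesically_invariant (schouten J p q nabla) (distD' J p q)) /\
  (geodesically_invariant (vranceanu br J p q nabla) (distD J p q) /\
   geodesically_invariant (vranceanu br J p q nabla) (distD' J p q)) /\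
  (geodesically_invariant (vidal J p q nablag) (distD J p q) /\
   geodesically_invariant (vidal J p q nablag) (distD' J p q)).
Proof.
move=> Hvf _ Hlc HJ _ HP Hd Hn.
have Hc := lc_conn Hlc.
have P0 := P0 p q HJ; have P'0 := P'0 p q HJ.
have PD := PD p q HJ; have P'D := P'D p q HJ.
have n0 := nab0 Hn; have n0X := nab0X Hn.
have b0l := br0l Hvf; have b0r := br0r Hvf.
have [hs hq] := s_facts Hd.
split; [split|split; [split|split]] => X Y HX HY.
- rewrite /schouten HX HY !n0 !P'0 !addr0 -PD; exact: PP'.
- rewrite /schouten HX HY !n0 !P0 !add0r -P'D; exact: P'P.
- rewrite /vranceanu /schouten HX HY !n0 !b0l !b0r !P'0 !P0 !addr0 -PD; exact: PP'.
- rewrite /vranceanu /schouten HX HY !n0X !b0l !b0r !P'0 !P0 !addr0; exact: P0.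
- apply: toD => //; apply: (vidal_inv HJ HP Hvf Hc); try exact: inD;
    rewrite /sigma_m; move: hq hs; move: (Num.sqrt (disc p q)) => s hq' hs'.
    by rewrite {1}hq'; field.
  have -> : 2 * ((p - s) / 2) - p = - s by field.
  by rewrite oppr_eq0.
- apply: toD' => //; apply: (vidal_inv HJ HP Hvf Hc); try exact: inD';
    rewrite /sigma_p; move: hq hs; move: (Num.sqrt (disc p q)) => s hq' hs'.
    by rewrite {1}hq'; field.
  have -> : 2 * ((p + s) / 2) - p = s by field.
  by [].
Qed.
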